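(* Let $(Y_t,X_{t-\delta})$ and $(\tilde Y_0,\tilde X_{-\delta})$ be two pairs of random variables, each on $\mathcal Y\times\mathcal X$ with $\mathcal Y,\mathcal X$ finite, and let $L$ be a loss function on $\mathcal Y\times\mathcal A$. If for all $x\in\mathcal X$ $$D_{\chi^2}\big(P_{Y_t|X_{t-\delta}=x}\,\|\,P_{\tilde Y_0|\tilde X_{-\delta}=x}\big)\le\beta^2,$$ then $$H_L(Y_t;\tilde Y_0|X_{t-\delta})=H_L(Y_t|X_{t-\delta})+O(\beta).$$
   Context: $L:\mathcal Y\times\mathcal A\to\mathbb R$ is a loss function (minima attained). For a distribution $P$ on $\mathcal Y$, a Bayes action $a_P$ is a minimizer of $a\mapsto\mathbb E_{Y\sim P}[L(Y,a)]$. $H_L(Y|X=x)=\min_{a}\mathbb E_{Y\sim P_{Y|X=x}}[L(Y,a)]$ and $H_L(Y|X)=\sum_xP_X(x)H_L(Y|X=x)$. The $L$-conditional cross entropy is $H_L(Y_t;\tilde Y_0|X_{t-\delta})=\sum_{x\in\mathcal X}P_{X_{t-\delta}}(x)\,\mathbb E_{Y\sim P_{Y_t|X_{t-\delta}=x}}\big[L(Y,a_{P_{\tilde Y_0|\tilde X_{-\delta}=x}})\big]$. Neyman's $\chi^2$-divergence $D_{\chi^2}(P\|Q)=\sum_y\frac{(P(y)-Q(y))^2}{Q(y)}$ ($0^2/0=0$). Big-O is as $\beta\to0$. *)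

(* Defs.v *)
From mathcomp Require Import all_boot all_order all_algebra.
From mathcomp Require Import all_classical all_reals.
From mathcomp Require Import ereal.
Set Implicit Arguments. Unset Strict Implicit. Unset Printing Implicit Defensive.
Import Order.TTheory GRing.Theory Num.Theory.
Local Open Scope ring_scope.
Local Open Scope classical_set_scope.

Section Defs.
Variable R : realType.

Definition is_distr (T : finType) (p : T -> R) : Prop :=
  (forall t, 0 <= p t) /\ \sum_(t : T) p t = 1.

Definition risk (Y : finType) (A : Type) (L : Y -> A -> R) (p : Y -> R) (a : A) : R :=
  \sum_(y : Y) p y * L y a.

Definition is_bayes (Y : finType) (A : Type) (L : Y -> A -> R) (p : Y -> R) (a : A) : Prop :=
  forall a' : A, risk L p a <= risk L p a'.

(* H_L for a single (conditional) distribution: min_a E_p[L(Y,a)] (taken as an infimum;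
   minima are attained by hypothesis) *)
Definition HLpt (Y : finType) (A : Type) (L : Y -> A -> R) (p : Y -> R) : R :=
  inf (range (risk L p)).

(* H_L(Y|X) = sum_x P_X(x) H_L(Y|X=x); PYX x is the conditional law P_{Y|X=x} *)
Definition HLcond (Y X : finType) (A : Type) (L : Y -> A -> R)
  (PX : X -> R) (PYX : X -> Y -> R) : R :=
  \sum_(x : X) PX x * HLpt L (PYX x).

(* L-conditional cross entropy, aQ x being a Bayes action of P_{~Y0|~X=x} *)
Definition HLcross (Y X : finType) (A : Type) (L : Y -> A -> R)
  (PX : X -> R) (PYX : X -> Y -> R) (aQ : X -> A) : R :=
  \sum_(x : X) PX x * risk L (PYX x) (aQ x).

Definition chi2 (Y : finType) (p q : Y -> R) : \bar R :=
  (\sum_(y : Y)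
     (if q y == 0%R then (if p y == 0%R then 0%E else +oo%E)
      else (((p y - q y) ^+ 2) / q y)%R%:E))%E.

End Defs.

(* Main.v *)
Require Import Defs.
From mathcomp Require Import all_boot all_order all_algebra.
From mathcomp Require Import all_classical all_reals.
From mathcomp Require Import ereal.
From mathcomp Require Import ring lra.
Import Order.TTheory GRing.Theory Num.Theory.
Local Open Scope ring_scope.

Section Aux.
Variable R : realType.

Lemma le_sum_term (Y : finType) (F : Y -> R) (i : Y) :
  (forall j, 0 <= F j) -> F i <= \sum_j F j.
Proof. by move=> H; rewrite (bigD1 i) //= lerDl sumr_ge0. Qed.

Lemma chi2_term (Y : finType) (p q : Y -> R) (b : R) :
  (forall y, 0 <= q y) -> (chi2 p q <= b%:E)%E -> forall y,
  (q y = 0 -> p y = 0) /\ (q y != 0 -> (p y - q y) ^+ 2 / q y <= b).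
Proof.
move=> q0 H y.
pose F := fun y => (if q y == 0%R then (if p y == 0%R then 0%E else +oo%E)
      else (((p y - q y) ^+ 2) / q y)%R%:E).
have F0 : forall y, (0 <= F y)%E.
  move=> z; rewrite /F /=; case: (q z == 0); first by case: (p z == 0).
  by rewrite lee_fin divr_ge0 // sqr_ge0.
have Hy : (F y <= b%:E)%E.
  apply: le_trans H; rewrite /chi2 -/F (bigD1 y) //=.
  apply: leeDl; apply: sume_ge0 => z _; exact: F0.
split.
  move=> qy; move: Hy; rewrite /F qy eqxx; case: eqP => // _.
by move=> /negPf qy; move: Hy; rewrite /F qy lee_fin.
Qed.

Lemma risk_mix (Y : finType) (A : Type) (L : Y -> A -> R) (p q s : Y -> R) mu a :
  (forall y, p y = (1 - mu) * q y + mu * s y) ->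
  risk L p a = (1 - mu) * risk L q a + mu * risk L s a.
Proof.
move=> H; rewrite /risk !mulr_sumr -big_split; apply: eq_bigr => y _.
rewrite H /=.
by rewrite mulrDl !mulrA.
Qed.


Lemma gap (Y : finType) (A : Type) (L : Y -> A -> R) (p q : Y -> R) (aQ : A) (k b M N : R) :
 is_distr p -> is_distr q -> is_bayes L q aQ ->
 (forall y, q y = 0 -> p y = 0) ->
 (forall y, q y != 0 -> (p y - q y)^+2 / q y <= b^+2) ->
 0 <= b -> k * b <= 1 -> 1 <= k -> (forall y, q y != 0 -> 1 <= k * q y) ->
 (forall s a, is_distr s -> - N <= risk L s a) ->
 (forall s, is_distr s -> risk L s aQ <= M) ->
 forall a, risk L p aQ - k * b * (M + N) <= risk L p a.
Proof.
move=> [p0 p1] [q0 q1] HB Hz Hc b0 kb k1 kq HN HM a.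
have qpos y : q y != 0 -> 0 < q y by move=> qy; rewrite lt_def qy q0.
have [bz|bpos] : b = 0 \/ 0 < b.
  by case: (eqVneq b 0) => [->|bn]; [left|right; rewrite lt_def bn b0].
  subst b; rewrite mulr0 mul0r subr0.
  have pq : p = q.
    apply: boolp.funext => y; case: (eqVneq (q y) 0) => [/[dup] qy /Hz -> //|qy].
    have := Hc y qy; rewrite expr0n /= ler_pdivrMr ?qpos // mul0r => h.
    have : (p y - q y)^+2 == 0 by rewrite eq_le h sqr_ge0.
    by rewrite sqrf_eq0 subr_eq0 => /eqP.
  by rewrite pq; exact: HB.
pose mu := k * b.
have mupos : 0 < mu by rewrite /mu mulr_gt0 // (lt_le_trans ltr01 k1).
have mun0 : mu != 0 by rewrite gt_eqF.
pose s := fun y => q y + (p y - q y) / mu.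
have sd : is_distr s.
  split.
    move=> y; case: (eqVneq (q y) 0) => [qy|qy].
      by rewrite /s qy Hz // subrr mul0r addr0.
    have qp := qpos y qy.
    have h : (p y - q y)^+2 <= b^+2 * q y by rewrite -ler_pdivrMr // Hc.
    have h1 : b^+2 * q y <= (mu * q y)^+2.
      have kk : 1 <= k * (k * q y) by rewrite -[1]mulr1 ler_pM // kq.
      have -> : (mu * q y)^+2 = b^+2 * q y * (k * (k * q y)) by rewrite /mu; ring.
      by rewrite ler_peMr // mulr_ge0 // sqr_ge0.
    have h2 : 0 <= mu * q y + (p y - q y).
      have c0 : 0 <= mu * q y by rewrite mulr_ge0 // ltW.
      set d := p y - q y in h h1 *; set c := mu * q y in h1 c0 *.
      have h3 : d ^+ 2 <= c ^+ 2 by apply: le_trans h h1.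
      rewrite !expr2 in h3; nra.
    have -> : s y = (mu * q y + (p y - q y)) / mu by rewrite /s; field.
    by rewrite divr_ge0 // ltW.
  by rewrite /s big_split /= -mulr_suml sumrB p1 q1 subrr mul0r addr0.
have mix : forall y, p y = (1 - mu) * q y + mu * s y.
  by move=> y; rewrite /s; field.
have mu1 : 0 <= 1 - mu by rewrite subr_ge0.
rewrite (@risk_mix _ _ L p q s mu a mix) (@risk_mix _ _ L p q s mu aQ mix).
have f1 : 0 <= (1 - mu) * (risk L q a - risk L q aQ) by rewrite mulr_ge0 // subr_ge0.
have f2 : 0 <= mu * (risk L s a + N) by apply: mulr_ge0; [exact: ltW| have := HN s a sd; rewrite -subr_ge0 opprK].
have f3 : 0 <= mu * (M - risk L s aQ) by apply: mulr_ge0; [exact: ltW| rewrite subr_ge0; exact: HM].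
rewrite -/mu; lra.
Qed.


Lemma HLpt_bounds (Y : finType) (A : Type) (L : Y -> A -> R) (p : Y -> R) (a0 : A) (c : R) :
  (forall a, risk L p a0 - c <= risk L p a) ->
  HLpt L p <= risk L p a0 /\ risk L p a0 - c <= HLpt L p.
Proof.
move=> H; have lb : lbound (range (risk L p)) (risk L p a0 - c).
  by move=> _ [a _ <-]; exact: H.
split.
  apply: (ge_inf (E := range (risk L p))); first by exists (risk L p a0 - c).
  by exists a0.
by apply: lb_le_inf => //; exists (risk L p a0), a0.
Qed.

End Aux.
Arguments le_sum_term {R Y} F i.
Arguments chi2_term {R Y p q b}.
Arguments gap {R Y A L p q aQ k b M N}.
Arguments HLpt_bounds {R Y A L p a0 c}.

Theorem lemma3p7 (R : realType) (Y X : finType) (A : Type) (L : Y -> A -> R)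
  (Lmin : forall p : Y -> R, is_distr p -> exists a : A, is_bayes L p a)
  (Q : X -> Y -> R) (HQ : forall x, is_distr (Q x))
  (aQ : X -> A) (HaQ : forall x, is_bayes L (Q x) (aQ x)) :
  exists C beta0 : R, 0 < beta0 /\
    forall (beta : R) (PX : X -> R) (P : X -> Y -> R),
      0 <= beta -> beta <= beta0 ->
      is_distr PX -> (forall x, is_distr (P x)) ->
      (forall x, (chi2 (P x) (Q x) <= (beta ^+ 2)%:E)%E) ->
      `| HLcross L PX P aQ - HLcond L PX P | <= C * beta.
Proof.
pose delta (y : Y) := fun t : Y => if t == y then (1 : R) else 0.
have dsum y (F : Y -> R) : \sum_t delta y t * F t = F y.
  rewrite (bigD1 y) //= /delta eqxx mul1r big1 ?addr0 // => t /negPf ->.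
  by rewrite mul0r.
have /boolp.choice [f Hf] : forall y, exists b, forall a, L y b <= L y a.
  move=> y.
  have [|b Hb] := Lmin (delta y).
    split; first by move=> t; rewrite /delta; case: (t == y).
    by have := dsum y (fun _ => 1); under eq_bigr do rewrite mulr1.
  by exists b => a; have := Hb a; rewrite /risk !dsum.
pose N := \sum_y `|L y (f y)|.
pose M := \sum_x \sum_y `|L y (aQ x)|.
pose k := 1 + \sum_x \sum_y (Q x y)^-1.
have k1 : 1 <= k by rewrite lerDl; do 2! (apply: sumr_ge0 => ? _); rewrite invr_ge0 (HQ _).1.
have k0 : 0 < k by apply: lt_le_trans k1.
have kq x y : Q x y != 0 -> 1 <= k * Q x y.
  move=> qn; rewrite -(mulVf qn) ler_wpM2r ?(HQ x).1 //.
  apply: le_trans (_ : \sum_x \sum_y (Q x y)^-1 <= k); last by rewrite lerDr.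
  apply: le_trans (le_sum_term (fun y => (Q x y)^-1) y _) _.
    by move=> y'; rewrite invr_ge0 (HQ _).1.
  apply: (le_sum_term (fun x => \sum_y (Q x y)^-1) x) => x'.
  by apply: sumr_ge0 => y' _; rewrite invr_ge0 (HQ _).1.
have HN s a : is_distr s -> - N <= risk L s a.
  move=> [s0 s1]; rewrite /risk.
  have -> : - N = \sum_t s t * (- N) by rewrite -mulr_suml s1 mul1r.
  apply: ler_sum => t _; rewrite ler_wpM2l //.
  apply: le_trans (Hf t a); rewrite lerNl; apply: le_trans (ler_norm _) _.
  by rewrite normrN; apply: (le_sum_term (fun y => `|L y (f y)|)).
have HM x s : is_distr s -> risk L s (aQ x) <= M.
  move=> [s0 s1]; rewrite /risk.
  have -> : M = \sum_t s t * M by rewrite -mulr_suml s1 mul1r.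
  apply: ler_sum => t _; rewrite ler_wpM2l //.
  apply: le_trans (ler_norm _) _.
  apply: le_trans (le_sum_term (fun y => `|L y (aQ x)|) t _) _ => //.
  apply: (le_sum_term (fun x => \sum_y `|L y (aQ x)|) x) => x'.
  by apply: sumr_ge0.
exists (k * (M + N)), k^-1; split; first by rewrite invr_gt0.
move=> beta PX P b0 bk [px0 px1] HP Hchi.
have kb : k * beta <= 1.
  by have := ler_wpM2l (ltW k0) bk; rewrite mulfV // gt_eqF.
have g x : 0 <= risk L (P x) (aQ x) - HLpt L (P x) <= k * beta * (M + N).
  have [Hz Hc] : (forall y, Q x y = 0 -> P x y = 0) /\
      (forall y, Q x y != 0 -> (P x y - Q x y) ^+ 2 / Q x y <= beta ^+ 2).
    have := chi2_term (HQ x).1 (Hchi x).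
    by move=> h; split => y; have [h1 h2] := h y.
  have := @gap R Y A L (P x) (Q x) (aQ x) k beta M N (HP x) (HQ x) (HaQ x) Hz Hc b0 kb k1
    (kq x) HN (HM x).
  move=> /HLpt_bounds [h1 h2]; apply/andP; split; first by rewrite subr_ge0.
  by rewrite lerBlDr addrC -lerBlDr.
have -> : HLcross L PX P aQ - HLcond L PX P =
    \sum_x PX x * (risk L (P x) (aQ x) - HLpt L (P x)).
  by rewrite /HLcross /HLcond -sumrB; apply: eq_bigr => x _; rewrite mulrBr.
rewrite ger0_norm; last by apply: sumr_ge0 => x _; rewrite mulr_ge0 // (andP (g x)).1.
have -> : k * (M + N) * beta = \sum_x PX x * (k * beta * (M + N)).
  by rewrite -mulr_suml px1 mul1r mulrAC.
by apply: ler_sum => x _; rewrite ler_wpM2l // (andP (g x)).2.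
Qed.
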